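(* For every $\lambda>0$, the function $\beta\mapsto\tilde\alpha(\beta,\lambda)$ is strictly decreasing on the set $\{\beta>0:\ \lambda+\beta\sqrt{\lambda}\ge 1\}$.
   Context: For $\lambda>0$ and real $n\ge 0$, the continuous Erlang-C function is $\bar\alpha(n,\lambda)=\min\Big\{1,\big[\lambda\int_0^\infty t e^{-\lambda t}(1+t)^{n-1}\,dt\big]^{-1}\Big\}$ (for $n\ge\lambda$ the minimum is attained by the second term; for integer $n>\lambda$ it equals the Erlang-C probability of waiting in an $M/M/n$ queue with arrival rate $\lambda$ and service rate 1). Set $\tilde\alpha(\beta,\lambda)=\bar\alpha(\lambda+\beta\sqrt\lambda,\lambda)$. *)

(* Defs.v *)
From Stdlib Require Import Reals Lra ClassicalEpsilon.
Open Scope R_scope.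

Definition improper_int0 (f : R -> R) (L : R) : Prop :=
  (forall b : R, 0 <= b -> inhabited (Riemann_integrable f 0 b)) /\
  (forall eps : R, 0 < eps -> exists M : R, forall (b : R)
      (pr : Riemann_integrable f 0 b), M <= b -> Rabs (RiemannInt pr - L) < eps).

(* The value of the improper integral (chosen by classical description;
   meaningful when the integral converges). *)
Definition int0_inf (f : R -> R) : R :=
  epsilon (inhabits 0) (fun L => improper_int0 f L).

Definition alpha_bar (n lam : R) : R :=
  Rmin 1 (/ (lam * int0_inf (fun t => t * exp (- lam * t) * Rpower (1 + t) (n - 1)))).

Definition alpha_tilde (beta lam : R) : R :=
  alpha_bar (lam + beta * sqrt lam) lam.

(* Main.v *)
Require Import Defs.
From Stdlib Require Import Reals Lra Classical ClassicalEpsilon.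
From Coquelicot Require Import Coquelicot.
Open Scope R_scope.

Definition g (lam n t : R) := t * exp (- lam * t) * Rpower (1 + t) (n - 1).

Lemma g_cont lam n t : -1 < t -> continuous (g lam n) t.
Proof.
  intros Ht. apply (@ex_derive_continuous R_AbsRing R_NormedModule). unfold g, Rpower.
  auto_derive. lra.
Qed.

Lemma Rpower_mult_base x y z : 0 < x -> 0 < y -> Rpower (x*y) z = Rpower x z * Rpower y z.
Proof. intros; unfold Rpower. rewrite ln_mult by lra. rewrite Rmult_plus_distr_l, exp_plus. ring. Qed.

Lemma polyexp lam K s : 0 < lam -> 0 < K -> 0 < s ->
  Rpower s K * Rpower (lam / K) K <= exp (lam * s).
Proof.
  intros Hl HK Hs.
  rewrite <- Rpower_mult_base by (try apply Rdiv_lt_0_compat; lra).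
  replace (exp (lam * s)) with (Rpower (exp (lam * s / K)) K).
  2:{ unfold Rpower. rewrite ln_exp. f_equal. field. lra. }
  apply Rle_Rpower_l; [lra|]. split.
  - apply Rmult_lt_0_compat; [lra| apply Rdiv_lt_0_compat; lra].
  - pose proof (exp_ineq1_le (lam * s / K)).
    replace (s * (lam / K)) with (lam * s / K) by (field; lra). lra.
Qed.
Lemma Rpower_pos x y : 0 < Rpower x y.
Proof. unfold Rpower; apply exp_pos. Qed.

Lemma bnd lam n : 0 < lam -> 0 <= n -> exists C, 0 < C /\
  forall t, 0 <= t -> exp (- lam * t) * Rpower (1 + t) n <= C / (1 + t) ^ 2.
Proof.
  intros Hl Hn. set (K := n + 2).
  assert (HK : 0 < K) by (unfold K; lra).
  set (P := Rpower (lam / K) K).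
  assert (HP : 0 < P) by apply Rpower_pos.
  exists (exp lam / P). split.
  { apply Rdiv_lt_0_compat; [apply exp_pos| lra]. }
  intros t Ht.
  assert (H1 : Rpower (1 + t) n = Rpower (1+t) K / (1+t)^2).
  { replace n with (K + - INR 2) by (unfold K; simpl; ring).
    rewrite Rpower_plus, Rpower_Ropp, Rpower_pow by lra. reflexivity. }
  rewrite H1.
  pose proof (polyexp lam K (1+t) Hl HK ltac:(lra)) as H2. fold P in H2.
  assert (Ht2 : 0 < (1+t)^2) by (apply pow_lt; lra).
  assert (E : exp (lam * (1 + t)) = exp lam * exp (lam * t)).
  { rewrite <- exp_plus. f_equal. ring. }
  assert (E2 : exp (- lam * t) * exp (lam * t) = 1).
  { rewrite <- exp_plus. replace (- lam * t + lam * t) with 0 by ring. apply exp_0. }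
  pose proof (exp_pos (- lam * t)). pose proof (Rpower_pos (1+t) K).
  unfold Rdiv. rewrite <- Rmult_assoc.
  apply Rmult_le_compat_r. { left; apply Rinv_0_lt_compat; lra. }
  apply (Rmult_le_reg_r P); [lra|].
  replace (exp lam * / P * P) with (exp lam) by (field; lra).
  rewrite Rmult_assoc. rewrite E in H2.
  apply Rle_trans with (exp (- lam * t) * (exp lam * exp (lam * t))).
  - apply Rmult_le_compat_l; lra.
  - replace (exp (- lam * t) * (exp lam * exp (lam * t))) with ((exp (- lam * t) * exp (lam * t)) * exp lam) by ring.
    rewrite E2. lra.
Qed.

Lemma g_nonneg lam n t : 0 <= t -> 0 <= g lam n t.
Proof. intros; unfold g. pose proof (exp_pos (-lam*t)); pose proof (Rpower_pos (1+t) (n-1)).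
  apply Rmult_le_pos; [apply Rmult_le_pos|]; lra. Qed.

Lemma ex_g lam n a b : 0 <= a -> a <= b -> ex_RInt (g lam n) a b.
Proof. intros. apply (@ex_RInt_continuous R_CompleteNormedModule). intros z Hz. apply g_cont.
  rewrite Rmin_left in Hz by lra. lra. Qed.

Lemma F_mono lam n b1 b2 : 0 <= b1 -> b1 <= b2 -> RInt (g lam n) 0 b1 <= RInt (g lam n) 0 b2.
Proof. intros.
  rewrite <- (RInt_Chasles (g lam n) 0 b1 b2) by (apply ex_g; lra).
  assert (0 <= RInt (g lam n) b1 b2).
  { apply RInt_ge_0; [lra| apply ex_g; lra|]. intros; apply g_nonneg; lra. }
  unfold plus; simpl. lra. Qed.

Lemma g_le lam n t : 0 <= t -> g lam n t <= exp (- lam * t) * Rpower (1 + t) n.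
Proof. intros. unfold g.
  replace (Rpower (1+t) n) with ((1+t) * Rpower (1+t) (n-1)).
  2:{ replace n with (1 + (n-1)) at 2 by ring. rewrite Rpower_plus, Rpower_1 by lra. ring. }
  pose proof (exp_pos (-lam*t)); pose proof (Rpower_pos (1+t) (n-1)).
  replace (exp (- lam * t) * ((1 + t) * Rpower (1 + t) (n - 1))) with
    ((1+t) * exp (- lam * t) * Rpower (1 + t) (n - 1)) by ring.
  apply Rmult_le_compat_r; [lra|]. apply Rmult_le_compat_r; lra. Qed.

Lemma int_inv2 C b : 0 <= b -> is_RInt (fun t => C / (1+t)^2) 0 b (C - C/(1+b)).
Proof. intros Hb.
  replace (C - C/(1+b)) with (minus ((fun t => - C/(1+t)) b) ((fun t => - C/(1+t)) 0)).
  2:{ unfold minus, plus, opp; simpl. field. lra. }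
  apply (@is_RInt_derive R_CompleteNormedModule (fun t => - C/(1+t)) _ 0 b).
  - intros x Hx. rewrite Rmin_left, Rmax_right in Hx by lra.
    auto_derive. lra. field. lra.
  - intros x Hx. rewrite Rmin_left, Rmax_right in Hx by lra.
    apply (@ex_derive_continuous R_AbsRing R_NormedModule). auto_derive. apply Rgt_not_eq; apply Rmult_lt_0_compat; lra.
Qed.

Lemma F_bound lam n : 0 < lam -> 1 <= n -> exists C, forall b, 0 <= b -> RInt (g lam n) 0 b <= C.
Proof. intros Hl Hn. destruct (bnd lam n Hl ltac:(lra)) as [C [HC HB]].
  exists C. intros b Hb.
  apply Rle_trans with (RInt (fun t => C / (1+t)^2) 0 b).
  - apply RInt_le; [lra| apply ex_g; lra| eexists; apply int_inv2; lra|].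
    intros x Hx. eapply Rle_trans; [apply g_le; lra| apply HB; lra].
  - rewrite (is_RInt_unique _ _ _ _ (int_inv2 C b Hb)).
    assert (0 < C/(1+b)) by (apply Rdiv_lt_0_compat; lra). lra.
Qed.

Lemma improper_exists lam n : 0 < lam -> 1 <= n ->
  improper_int0 (g lam n) (int0_inf (g lam n)).
Proof.
  intros Hl Hn. unfold int0_inf. apply epsilon_spec.
  destruct (F_bound lam n Hl Hn) as [C HC].
  set (E := fun y => exists b, 0 <= b /\ y = RInt (g lam n) 0 b).
  destruct (completeness E) as [L [HL1 HL2]].
  { exists C. intros y [b [Hb ->]]. apply HC; lra. }
  { exists (RInt (g lam n) 0 0). exists 0. split; [lra|reflexivity]. }
  exists L. split.
  - intros b Hb. constructor. apply ex_RInt_Reals_0. apply ex_g; lra.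
  - intros eps Heps.
    assert (Hex : exists b, 0 <= b /\ L - eps < RInt (g lam n) 0 b).
    { apply NNPP. intros Hne.
      assert (is_upper_bound E (L - eps)).
      { intros y [b [Hb ->]]. apply Rnot_lt_le. intros Hlt. apply Hne. exists b; split; auto. }
      specialize (HL2 _ H). lra. }
    destruct Hex as [b0 [Hb0 Hlt]]. exists b0.
    intros b pr Hb. rewrite <- RInt_Reals.
    assert (RInt (g lam n) 0 b0 <= RInt (g lam n) 0 b) by (apply F_mono; lra).
    assert (RInt (g lam n) 0 b <= L) by (apply HL1; exists b; split; [lra|reflexivity]).
    apply Rabs_def1; lra.
Qed.

Lemma lim_RInt f L : improper_int0 f L -> forall eps, 0 < eps ->
  exists M, 0 <= M /\ forall b, M <= b -> Rabs (RInt f 0 b - L) < eps.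
Proof.
  intros [H1 H2] eps He. destruct (H2 eps He) as [M HM].
  exists (Rmax M 0). split; [apply Rmax_r|].
  intros b Hb. destruct (H1 b) as [pr].
  { eapply Rle_trans; [apply Rmax_r| exact Hb]. }
  rewrite (RInt_Reals f 0 b pr). apply HM.
  eapply Rle_trans; [apply Rmax_l| exact Hb].
Qed.

Lemma F_le_I lam n b : 0 < lam -> 1 <= n -> 0 <= b ->
  RInt (g lam n) 0 b <= int0_inf (g lam n).
Proof.
  intros Hl Hn Hb. apply Rnot_lt_le. intros Hlt.
  destruct (lim_RInt _ _ (improper_exists lam n Hl Hn) (RInt (g lam n) 0 b - int0_inf (g lam n)))
    as [M [HM0 HM]]; [lra|].
  specialize (HM (Rmax M b) (Rmax_l _ _)).
  assert (RInt (g lam n) 0 b <= RInt (g lam n) 0 (Rmax M b)) by (apply F_mono; [lra| apply Rmax_r]).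
  apply Rabs_def2 in HM. lra.
Qed.

Lemma Rpower_m1 x n : 0 < x -> Rpower x (n - 1) = Rpower x n / x.
Proof. intros. replace (n-1) with (n + Ropp 1) by ring.
  rewrite Rpower_plus, Rpower_Ropp, Rpower_1 by lra. reflexivity. Qed.

Definition G lam n t := - (exp (- lam * t) * Rpower (1 + t) n) / lam.
Definition dG lam n t := exp (- lam * t) * Rpower (1 + t) (n - 1) * (lam * t + lam - n) / lam.

Lemma G_deriv lam n t : 0 < lam -> -1 < t -> is_derive (G lam n) t (dG lam n t).
Proof. intros Hl Ht. unfold G, dG. rewrite Rpower_m1 by lra. unfold Rpower.
  auto_derive. lra. field. lra. Qed.

Lemma dG_cont lam n t : 0 < lam -> -1 < t -> continuous (dG lam n) t.
Proof. intros Hl Ht. apply (@ex_derive_continuous R_AbsRing R_NormedModule).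
  unfold dG, Rpower. auto_derive. lra. Qed.

Lemma F_lower lam n b : 0 < lam -> 1 <= n -> lam <= n -> 0 <= b ->
  (1 - exp (- lam * b) * Rpower (1 + b) n) / lam <= RInt (g lam n) 0 b.
Proof. intros Hl Hn Hln Hb.
  assert (HI : is_RInt (dG lam n) 0 b (minus (G lam n b) (G lam n 0))).
  { apply (@is_RInt_derive R_CompleteNormedModule).
    - intros x Hx. rewrite Rmin_left in Hx by lra. apply G_deriv; lra.
    - intros x Hx. rewrite Rmin_left in Hx by lra. apply dG_cont; lra. }
  replace ((1 - exp (- lam * b) * Rpower (1 + b) n) / lam) with (minus (G lam n b) (G lam n 0)).
  2:{ unfold minus, plus, opp, G; simpl. rewrite Rplus_0_r, Rmult_0_r, exp_0.
      unfold Rpower. rewrite ln_1, Rmult_0_r, exp_0. field. lra. }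
  rewrite <- (is_RInt_unique _ _ _ _ HI).
  apply RInt_le; [lra| eexists; exact HI| apply ex_g; lra|].
  intros x Hx. unfold dG, g.
  pose proof (exp_pos (-lam*x)); pose proof (Rpower_pos (1+x) (n-1)).
  apply (Rmult_le_reg_r lam); [lra|].
  replace (exp (- lam * x) * Rpower (1 + x) (n - 1) * (lam * x + lam - n) / lam * lam)
    with (x * exp (- lam * x) * Rpower (1 + x) (n - 1) * lam
          - (n - lam) * (exp (- lam * x) * Rpower (1 + x) (n - 1))) by (field; lra).
  assert (0 <= (n - lam) * (exp (- lam * x) * Rpower (1 + x) (n - 1))).
  { apply Rmult_le_pos; [lra|]. apply Rmult_le_pos; lra. }
  lra.
Qed.

Lemma lamI lam n : 0 < lam -> 1 <= n -> lam <= n -> 1 <= lam * int0_inf (g lam n).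
Proof. intros Hl Hn Hln. set (I := int0_inf (g lam n)).
  destruct (bnd lam n Hl ltac:(lra)) as [C [HC HB]].
  apply Rnot_lt_le. intros Hlt.
  set (b := 2 * C / (1 - lam * I)).
  assert (Hb : 0 < b) by (unfold b; apply Rdiv_lt_0_compat; lra).
  pose proof (F_lower lam n b Hl Hn Hln ltac:(lra)) as H1.
  pose proof (F_le_I lam n b Hl Hn ltac:(lra)) as H2. fold I in H2.
  pose proof (HB b ltac:(lra)) as H3.
  set (F := RInt (g lam n) 0 b) in *. change (CompleteSpace.sort R_CompleteNormedModule) with R in F.
  assert (H4 : C / (1+b)^2 <= C / (1+b)).
  { apply Rmult_le_compat_l; [lra|]. apply Rinv_le_contravar; [lra|].
    simpl. nra. }
  assert (H5 : C / (1 + b) < 1 - lam * I).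
  { apply (Rmult_lt_reg_r (1+b)); [lra|].
    replace (C / (1+b) * (1+b)) with C by (field; lra).
    unfold b. replace ((1 - lam * I) * (1 + 2 * C / (1 - lam * I))) with ((1 - lam*I) + 2*C) by (field; lra).
    lra. }
  assert (H6 : 1 - exp (- lam * b) * Rpower (1 + b) n <= lam * F).
  { apply (Rmult_le_reg_r (/lam)). apply Rinv_0_lt_compat; lra.
    replace (lam * F * / lam) with F by (field; lra). exact H1. }
  assert (lam * F <= lam * I) by (apply Rmult_le_compat_l; lra).
  lra.
Qed.

Definition h lam n1 n2 t := g lam n2 t - g lam n1 t.

Lemma h_nonneg lam n1 n2 t : 1 <= n1 <= n2 -> 0 <= t -> 0 <= h lam n1 n2 t.
Proof. intros Hn Ht. unfold h, g.
  assert (Rpower (1+t) (n1-1) <= Rpower (1+t) (n2-1)) by (apply Rle_Rpower; lra).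
  pose proof (exp_pos (-lam*t)).
  assert (0 <= t * exp (-lam*t)) by (apply Rmult_le_pos; lra).
  assert (t * exp (- lam * t) * Rpower (1 + t) (n1 - 1) <= t * exp (- lam * t) * Rpower (1 + t) (n2 - 1))
    by (apply Rmult_le_compat_l; lra).
  lra. Qed.

Lemma h_lower lam n1 n2 t : 0 < lam -> 1 <= n1 < n2 -> 1/2 <= t <= 1 ->
  1/2 * exp (- lam) * (Rpower (3/2) (n2 - n1) - 1) <= h lam n1 n2 t.
Proof. intros Hl Hn Ht. unfold h, g.
  assert (HP1 : 1 <= Rpower (1+t) (n1-1)).
  { apply Rle_trans with (Rpower (1+t) 0); [rewrite Rpower_O; lra| apply Rle_Rpower; lra]. }
  assert (HP2 : Rpower (1+t) (n2-1) = Rpower (1+t) (n1-1) * Rpower (1+t) (n2-n1)).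
  { rewrite <- Rpower_plus. f_equal. ring. }
  assert (HQ : Rpower (3/2) (n2-n1) <= Rpower (1+t) (n2-n1)) by (apply Rle_Rpower_l; lra).
  assert (HQ1 : 1 < Rpower (3/2) (n2-n1)).
  { apply Rle_lt_trans with (Rpower (3/2) 0); [rewrite Rpower_O; lra| apply Rpower_lt; lra]. }
  assert (HE : exp (- lam) <= exp (- lam * t)).
  { destruct (Req_dec t 1) as [->|Hne]. { rewrite Rmult_1_r; lra. }
    left. apply exp_increasing. nra. }
  pose proof (exp_pos (-lam)).
  rewrite HP2.
  replace (t * exp (- lam * t) * (Rpower (1 + t) (n1 - 1) * Rpower (1 + t) (n2 - n1)) -
           t * exp (- lam * t) * Rpower (1 + t) (n1 - 1))
    with ((t * exp (- lam * t)) * (Rpower (1 + t) (n1 - 1) * (Rpower (1 + t) (n2 - n1) - 1))) by ring.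
  replace (1 / 2 * exp (- lam) * (Rpower (3 / 2) (n2 - n1) - 1)) with
    ((1 / 2 * exp (- lam)) * (1 * (Rpower (3 / 2) (n2 - n1) - 1))) by ring.
  apply Rmult_le_compat.
  - nra.
  - nra.
  - apply Rmult_le_compat; lra.
  - apply Rmult_le_compat; lra.
Qed.

Lemma ex_h lam n1 n2 a b : 0 <= a -> a <= b -> ex_RInt (h lam n1 n2) a b.
Proof. intros. apply (@ex_RInt_minus R_NormedModule); apply ex_g; lra. Qed.

Lemma D_lower lam n1 n2 b : 0 < lam -> 1 <= n1 < n2 -> 1 <= b ->
  1/4 * exp (- lam) * (Rpower (3/2) (n2 - n1) - 1) <= RInt (g lam n2) 0 b - RInt (g lam n1) 0 b.
Proof. intros Hl Hn Hb.
  assert (E : RInt (g lam n2) 0 b - RInt (g lam n1) 0 b = RInt (h lam n1 n2) 0 b).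
  { unfold h. rewrite (RInt_minus (V:=R_CompleteNormedModule)) by (apply ex_g; lra). reflexivity. }
  rewrite E.
  rewrite <- (RInt_Chasles (h lam n1 n2) 0 (1/2) b) by (apply ex_h; lra).
  rewrite <- (RInt_Chasles (h lam n1 n2) (1/2) 1 b) by (apply ex_h; lra).
  assert (0 <= RInt (h lam n1 n2) 0 (1/2)).
  { apply RInt_ge_0; [lra| apply ex_h; lra|]. intros; apply h_nonneg; lra. }
  assert (0 <= RInt (h lam n1 n2) 1 b).
  { apply RInt_ge_0; [lra| apply ex_h; lra|]. intros; apply h_nonneg; lra. }
  assert (RInt (fun _ => 1/2 * exp (- lam) * (Rpower (3/2) (n2 - n1) - 1)) (1/2) 1 <= RInt (h lam n1 n2) (1/2) 1).
  { apply RInt_le; [lra| apply (@ex_RInt_const R_CompleteNormedModule)| apply ex_h; lra|].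
    intros; apply h_lower; lra. }
  rewrite RInt_const in H1. unfold scal in H1; simpl in H1. unfold mult in H1; simpl in H1.
  unfold plus; simpl. lra.
Qed.

Lemma I_strict lam n1 n2 : 0 < lam -> 1 <= n1 < n2 ->
  int0_inf (g lam n1) < int0_inf (g lam n2).
Proof. intros Hl Hn.
  set (d := 1/4 * exp (- lam) * (Rpower (3/2) (n2 - n1) - 1)).
  assert (Hd : 0 < d).
  { unfold d. pose proof (exp_pos (-lam)).
    assert (1 < Rpower (3/2) (n2-n1)).
    { apply Rle_lt_trans with (Rpower (3/2) 0); [rewrite Rpower_O; lra| apply Rpower_lt; lra]. }
    apply Rmult_lt_0_compat; [|lra]. lra. }
  destruct (lim_RInt _ _ (improper_exists lam n1 Hl ltac:(lra)) (d/4)) as [M1 [_ HM1]]; [lra|].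
  destruct (lim_RInt _ _ (improper_exists lam n2 Hl ltac:(lra)) (d/4)) as [M2 [_ HM2]]; [lra|].
  set (b := Rmax 1 (Rmax M1 M2)).
  assert (Hb1 : 1 <= b) by apply Rmax_l.
  assert (HbM1 : M1 <= b) by (unfold b; eapply Rle_trans; [apply Rmax_l| apply Rmax_r]).
  assert (HbM2 : M2 <= b) by (unfold b; eapply Rle_trans; [apply Rmax_r| apply Rmax_r]).
  specialize (HM1 b HbM1). specialize (HM2 b HbM2).
  pose proof (D_lower lam n1 n2 b Hl Hn Hb1). fold d in H.
  apply Rabs_def2 in HM1. apply Rabs_def2 in HM2. lra.
Qed.

Theorem lemma6 (lam : R) (Hlam : 0 < lam) :
  forall beta1 beta2 : R,
    0 < beta1 -> 1 <= lam + beta1 * sqrt lam ->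
    0 < beta2 -> 1 <= lam + beta2 * sqrt lam ->
    beta1 < beta2 -> alpha_tilde beta2 lam < alpha_tilde beta1 lam.
Proof.
  intros b1 b2 H1 H1n H2 H2n H12.
  unfold alpha_tilde, alpha_bar.
  set (n1 := lam + b1 * sqrt lam) in *. set (n2 := lam + b2 * sqrt lam) in *.
  change (fun t => t * exp (- lam * t) * Rpower (1 + t) (n1 - 1)) with (g lam n1).
  change (fun t => t * exp (- lam * t) * Rpower (1 + t) (n2 - 1)) with (g lam n2).
  pose proof (sqrt_lt_R0 lam Hlam) as Hs.
  assert (Hn12 : n1 < n2) by (unfold n1, n2; nra).
  assert (Hl1 : lam <= n1) by (unfold n1; nra).
  assert (Hl2 : lam <= n2) by (unfold n2; nra).
  pose proof (lamI lam n1 Hlam H1n Hl1) as A1.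
  pose proof (lamI lam n2 Hlam H2n Hl2) as A2.
  pose proof (I_strict lam n1 n2 Hlam ltac:(lra)) as A3.
  set (I1 := int0_inf (g lam n1)) in *. set (I2 := int0_inf (g lam n2)) in *.
  assert (B12 : lam * I1 < lam * I2) by (apply Rmult_lt_compat_l; lra).
  assert (C1 : / (lam * I1) <= 1).
  { rewrite <- Rinv_1. apply Rinv_le_contravar; lra. }
  assert (C2 : / (lam * I2) < / (lam * I1)) by (apply Rinv_lt_contravar; nra).
  rewrite (Rmin_right 1 (/ (lam * I1))) by lra.
  rewrite (Rmin_right 1 (/ (lam * I2))) by lra.
  exact C2.
Qed.
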